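(* Let $\mu>0$, $c_0>0$, $c_1>0$, $c_2>0$. Then the equation \[ \ln\frac{1-B}{1+B} + \frac{2B}{1-B^2} = \frac{2\mu^2c_2}{c_1} \] has a unique solution $B\in(0,1)$, and, for this $B$, the equation \[ \Bigl(\frac{c_1}{2c_0} -1\Bigr) \ln\frac{1-A}{1+A} + \frac{2}{1+A} \Bigl(\frac{c_1}{2c_0} + \frac{A}{1-A} \Bigr) = \frac{c_1}{c_0(1-B^2)} \] has a unique solution $A\in(0,1)$. Moreover, if $c_1=2c_0$, then $A=B$. *)

(* Defs.v *)
From Stdlib Require Import Reals.
Open Scope R_scope.

Definition eqB (mu c1 c2 B : R) : Prop :=
  ln ((1 - B) / (1 + B)) + 2 * B / (1 - B ^ 2) = 2 * mu ^ 2 * c2 / c1.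

Definition eqA (c0 c1 B A : R) : Prop :=
  (c1 / (2 * c0) - 1) * ln ((1 - A) / (1 + A))
  + 2 / (1 + A) * (c1 / (2 * c0) + A / (1 - A))
  = c1 / (c0 * (1 - B ^ 2)).

(* Main.v *)
Require Import Defs.
From Stdlib Require Import Reals Lra Ranalysis5.
From Coquelicot Require Import Coquelicot.
Open Scope R_scope.

Definition F x := ln ((1 - x) / (1 + x)) + 2 * x / (1 - x ^ 2).
Definition H k x := (k - 1) * ln ((1 - x) / (1 + x)) + 2 / (1 + x) * (k + x / (1 - x)).

Lemma F_der x : -1 < x < 1 -> is_derive F x (4 * x^2 / (1 - x^2)^2).
Proof. intros Hx. unfold F. auto_derive.
- repeat split; try lra. apply Rdiv_lt_0_compat; lra. nra.
- field. repeat split; try lra; nra.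
Qed.

Lemma H_der k x : -1 < x < 1 -> is_derive (H k) x (4 * (1 - k * (1 - x)) / ((1 - x)^2 * (1 + x)^2)).
Proof. intros Hx. unfold H. auto_derive.
- repeat split; try lra. apply Rdiv_lt_0_compat; lra.
- field. repeat split; try lra.
Qed.

Lemma cont_of_der f x l : is_derive f x l -> continuity_pt f x.
Proof.
  intros D. apply continuity_pt_filterlim.
  apply (ex_derive_continuous f x). exists l. exact D.
Qed.

Lemma ivt_gen (g : R -> R) a b T : a < b ->
  (forall x, a <= x <= b -> continuity_pt g x) ->
  g a < T -> T <= g b -> exists z, a < z <= b /\ g z = T.
Proof.
  intros Hab C Ha Hb.
  destruct (Rle_lt_or_eq_dec _ _ Hb) as [Hlt|Heq].
  - destruct (IVT_interv (fun x => g x - T) a b) as [z [Hz1 Hz2]]; auto; try lra.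
    + intros x Hx. apply continuity_pt_minus. auto. apply continuity_pt_const. intros u v; auto.
    + exists z. split; [|lra]. split; [|lra].
      destruct (Rle_lt_or_eq_dec _ _ (proj1 Hz1)) as [h|h]; auto. subst; lra.
  - exists b. split; [lra|auto].
Qed.

Lemma L_neg x : 0 < x < 1 -> ln ((1 - x) / (1 + x)) < 0.
Proof.
  intros Hx. rewrite <- ln_1. apply ln_increasing.
  apply Rdiv_lt_0_compat; lra.
  apply Rmult_lt_reg_r with (1 + x). lra.
  unfold Rdiv. rewrite Rmult_assoc, Rinv_l by lra. lra.
Qed.

Lemma growth M T : 0 <= M ->
  exists x, 0 < x < 1 /\ T <= 2 * x / (1 - x ^ 2) + M * ln ((1 - x) / (1 + x)).
Proof.
  intros HM.
  set (w := 4 * M + 2 * Rabs T + 2).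
  assert (Hw : 2 <= w) by (pose proof (Rabs_pos T); unfold w; lra).
  set (z := w * w).
  assert (Hz : 4 <= z) by (unfold z; nra).
  exists ((z - 1) / (z + 1)).
  assert (E1 : (1 - (z - 1) / (z + 1)) / (1 + (z - 1) / (z + 1)) = / z) by (field; lra).
  assert (E2 : 2 * ((z - 1) / (z + 1)) / (1 - ((z - 1) / (z + 1)) ^ 2) = (z * z - 1) / (2 * z)) by (field; lra).
  rewrite E1, E2, ln_Rinv by lra.
  assert (Ez : ln z = 2 * ln w) by (unfold z; rewrite ln_mult by lra; ring). rewrite Ez.
  assert (Hl : ln w <= w - 1).
  { pose proof (exp_ineq1_le (ln w)). rewrite exp_ln in H0 by lra. lra. }
  split.
  - split. apply Rdiv_lt_0_compat; lra.
    apply Rmult_lt_reg_r with (z + 1). lra.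
    unfold Rdiv. rewrite Rmult_assoc, Rinv_l by lra. lra.
  - assert (Hq : (z * z - 1) / (2 * z) >= (z - 1) / 2).
    { assert (Eq : (z*z-1)/(2*z) = (z-1)/2 + (z-1)/(2*z)) by (field; lra).
      assert (0 < (z-1)/(2*z)) by (apply Rdiv_lt_0_compat; lra). lra. }
    assert (HT : T <= Rabs T) by apply RRle_abs.
    assert (Hg : (z - 1) / 2 >= T + 2 * M * w).
    { unfold z. pose proof (Rabs_pos T). unfold w in *. nra. }
    nra.
Qed.

Lemma F_cont x : -1 < x < 1 -> continuity_pt F x.
Proof. intros; eapply cont_of_der, F_der; auto. Qed.
Lemma H_cont k x : -1 < x < 1 -> continuity_pt (H k) x.
Proof. intros; eapply cont_of_der, H_der; auto. Qed.

Lemma F0 : F 0 = 0.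
Proof. unfold F. replace ((1-0)/(1+0)) with 1 by field. rewrite ln_1. field. Qed.
Lemma H0 k : H k 0 = 2 * k.
Proof. unfold H. replace ((1-0)/(1+0)) with 1 by field. rewrite ln_1. field. Qed.

Lemma F_incr x y : 0 < x -> x < y -> y < 1 -> F x < F y.
Proof.
  intros. apply (incr_function F 0 1 (fun x => 4 * x^2 / (1 - x^2)^2)); simpl; auto.
  - intros t Ht1 Ht2. apply F_der. lra.
  - intros t Ht1 Ht2. apply Rdiv_lt_0_compat. nra. assert (0 < 1 - t^2) by nra. nra.
Qed.

Lemma H_incr k a0 x y : 0 < k -> 0 <= a0 -> 1 - 1/k <= a0 -> a0 < x -> x < y -> y < 1 -> H k x < H k y.
Proof.
  intros Hk Ha0 Ha1 **. apply (incr_function (H k) a0 1 (fun x => 4 * (1 - k * (1 - x)) / ((1 - x)^2 * (1 + x)^2))); simpl; auto.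
  - intros t Ht1 Ht2. apply H_der. lra.
  - intros t Ht1 Ht2. apply Rdiv_lt_0_compat.
    + assert (k * (1/k) = 1) by (field; lra).
      assert (1 - t < 1/k) by lra. nra.
    + assert (0 < (1-t)^2) by nra. assert (0 < (1+t)^2) by nra. nra.
Qed.

Lemma H_dec k A : 1 < k -> 0 < A -> A <= 1 - 1/k -> H k A <= 2 * k.
Proof.
  intros Hk HA HA1.
  assert (Hk1 : k * (1/k) = 1) by (field; lra).
  assert (0 < 1/k) by (apply Rdiv_lt_0_compat; lra).
  destruct (MVT_gen (H k) 0 A (fun x => 4 * (1 - k * (1 - x)) / ((1 - x)^2 * (1 + x)^2))) as [c [Hc E]].
  - rewrite Rmin_left, Rmax_right by lra. intros x Hx. apply H_der. lra.
  - rewrite Rmin_left, Rmax_right by lra. intros x Hx. apply H_cont. lra.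
  - rewrite Rmin_left, Rmax_right in Hc by lra. rewrite H0 in E.
    assert (4 * (1 - k * (1 - c)) / ((1 - c)^2 * (1 + c)^2) <= 0).
    { unfold Rdiv. apply Rmult_le_0_r. nra.
      left. apply Rinv_0_lt_compat. assert (0 < (1-c)^2) by nra. assert (0 < (1+c)^2) by nra. nra. }
    nra.
Qed.

Theorem lemma1 (mu c0 c1 c2 : R) :
  0 < mu -> 0 < c0 -> 0 < c1 -> 0 < c2 ->
  exists B : R,
    (0 < B < 1 /\ eqB mu c1 c2 B) /\
    (forall B' : R, 0 < B' < 1 -> eqB mu c1 c2 B' -> B' = B) /\
    (exists A : R,
       (0 < A < 1 /\ eqA c0 c1 B A) /\
       (forall A' : R, 0 < A' < 1 -> eqA c0 c1 B A' -> A' = A) /\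
       (c1 = 2 * c0 -> A = B)).
Proof.
  intros Hmu Hc0 Hc1 Hc2.
  set (K := 2 * mu ^ 2 * c2 / c1).
  assert (HK : 0 < K) by (unfold K; apply Rdiv_lt_0_compat; [assert (0 < mu ^ 2) by (apply pow_lt; lra); nra|lra]).
  assert (EB : forall B, eqB mu c1 c2 B <-> F B = K) by (intros; unfold eqB, F, K; tauto).
  destruct (growth 1 K) as [x1 [Hx1 Hx1']]; [lra|].
  assert (Fx1 : K <= F x1) by (unfold F; lra).
  destruct (ivt_gen F 0 x1 K) as [B [HB HFB]]; try lra.
  { intros; apply F_cont; lra. }
  { rewrite F0; lra. }
  assert (HB1 : 0 < B < 1) by lra.
  exists B. split; [split; [auto| apply EB; auto]|].
  split.
  { intros B' HB' E'. apply (proj1 (EB B')) in E'.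
    destruct (Rtotal_order B' B) as [h|[h|h]]; auto.
    - pose proof (F_incr B' B ltac:(lra) h ltac:(lra)); lra.
    - pose proof (F_incr B B' ltac:(lra) h ltac:(lra)); lra. }
  set (k := c1 / (2 * c0)).
  assert (Hk : 0 < k) by (unfold k; apply Rdiv_lt_0_compat; lra).
  set (RHS := c1 / (c0 * (1 - B ^ 2))).
  assert (ERHS : RHS = 2 * k / (1 - B^2)) by (unfold RHS, k; field; split; nra).
  assert (HR : 2 * k < RHS).
  { rewrite ERHS. assert (0 < 1 - B^2 < 1) by nra.
    assert (E : 2*k/(1-B^2) - 2*k = 2*k*B^2/(1-B^2)) by (field; lra).
    assert (0 < 2*k*B^2/(1-B^2)) by (apply Rdiv_lt_0_compat; nra). lra. }
  assert (EA : forall A, eqA c0 c1 B A <-> H k A = RHS) by (intros; unfold eqA, H, k, RHS; tauto).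
  destruct (growth (Rabs (k - 1)) RHS) as [x2 [Hx2 Hx2']]; [apply Rabs_pos|].
  assert (Hx2'' : RHS <= H k x2).
  { unfold H.
    pose proof (L_neg x2 Hx2).
    assert (E : 2 / (1 + x2) * (k + x2 / (1 - x2)) = 2 * k / (1 + x2) + 2 * x2 / (1 - x2^2)) by (field; repeat split; nra).
    rewrite E.
    assert (0 < 2 * k / (1 + x2)) by (apply Rdiv_lt_0_compat; lra).
    assert ((k - 1) * ln ((1 - x2) / (1 + x2)) >= Rabs (k - 1) * ln ((1 - x2) / (1 + x2))).
    { destruct (Rle_or_lt 0 (k - 1)).
      - rewrite Rabs_right by lra. lra.
      - rewrite Rabs_left by lra. nra. }
    lra. }
  destruct (ivt_gen (H k) 0 x2 RHS) as [A [HA HHA]]; try lra.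
  { intros; apply H_cont; lra. }
  { rewrite H0; lra. }
  set (a0 := Rmax 0 (1 - 1/k)).
  assert (Ha0 : 0 <= a0 /\ 1 - 1/k <= a0) by (split; [apply Rmax_l | apply Rmax_r]).
  assert (Hsol : forall A', 0 < A' < 1 -> H k A' = RHS -> a0 < A').
  { intros A' HA' E'. unfold a0. apply Rmax_lub_lt; [lra|].
    destruct (Rlt_or_le (1 - 1/k) A') as [h|h]; auto.
    exfalso. destruct (Rlt_or_le 1 k) as [hk|hk].
    - pose proof (H_dec k A' hk (proj1 HA') h). lra.
    - assert (1 <= 1/k). { apply Rmult_le_reg_r with k; auto. unfold Rdiv. rewrite Rmult_assoc, Rinv_l by lra. lra. }
      lra. }
  assert (HA1 : 0 < A < 1) by lra.
  assert (Hu : forall A', 0 < A' < 1 -> eqA c0 c1 B A' -> A' = A).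
  { intros A' HA' E'. apply (proj1 (EA A')) in E'.
    pose proof (Hsol A' HA' E'). pose proof (Hsol A HA1 HHA).
    destruct (Rtotal_order A' A) as [h|[h|h]]; auto.
    - pose proof (H_incr k a0 A' A Hk (proj1 Ha0) (proj2 Ha0)); lra.
    - pose proof (H_incr k a0 A A' Hk (proj1 Ha0) (proj2 Ha0)); lra. }
  exists A. split; [split; [auto | apply EA; auto]|]. split; auto.
  intros Hc. symmetry. apply Hu; auto. apply EA.
  assert (k = 1) by (unfold k; rewrite Hc; field; lra).
  rewrite ERHS. unfold H. rewrite H1. field. split; nra.
Qed.
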